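(* Let $\mathcal{H}$ be finite-dimensional, $\mathscr{A}\subseteq\mathfrak{B}(\mathcal{H})$ a $*$-subalgebra, $\mathcal{L}:\mathscr{A}\to\mathscr{A}$ a Lindblad generator, $\mathfrak{S}\subseteq\mathfrak{D}(\mathcal{H})\cap\mathscr{A}$ a set of initial states, and $\mathscr{R}=\mathrm{span}\{e^{\mathcal{L}t}(\rho_0):t\ge0,\rho_0\in\mathfrak{S}\}$ the reachable subspace. Let $\mathscr{V}$ be an operator subspace with $\mathscr{R}\subseteq\mathscr{V}$, let $\Pi_{\mathscr{V}}$ be a (not necessarily orthogonal) projection superoperator onto $\mathscr{V}$, and let $\mathcal{R},\mathcal{J}$ be full-rank factors of $\Pi_\mathscr{V}$, i.e. $\mathcal{R}$ maps onto a space $\mathcal{X}$ with $\dim\mathcal{X}=\dim\mathscr{V}$, $\mathcal{J}:\mathcal{X}\to\mathscr{V}$, $\mathcal{J}\mathcal{R}=\Pi_\mathscr{V}$ and $\mathcal{R}\mathcal{J}=\mathcal{I}$ (identity on $\mathcal{X}$). Define $\mathcal{F}_L\equiv\mathcal{R}\mathcal{L}\mathcal{J}$. Then $$e^{\mathcal{L}t}(\rho_0)=\mathcal{J}e^{\mathcal{F}_Lt}\mathcal{R}(\rho_0)\qquad\forall t\ge0,\ \forall\rho_0\in\mathfrak{S}.$$ Moreover, $\mathscr{V}=\mathscr{R}$ is an operator subspace of minimal dimension for which this identity holds.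
   Context: A Lindblad generator has the form $\mathcal{L}(\rho)=-i[H,\rho]+\sum_u\big(L_u\rho L_u^\dagger-\tfrac12\{L_u^\dagger L_u,\rho\}\big)$ with $H=H^\dagger$. $\mathfrak{D}(\mathcal{H})$ is the set of density operators on $\mathcal{H}$. A projection superoperator is an idempotent linear map on the operator space with image $\mathscr{V}$. *)

(* Defs.v *)
From HB Require Import structures.
From mathcomp Require Import all_boot all_order all_algebra.
From mathcomp Require Import complex.
From mathcomp Require Import all_classical all_reals all_analysis.
Set Implicit Arguments. Unset Strict Implicit. Unset Printing Implicit Defensive.
Import Order.TTheory GRing.Theory Num.Theory.
Import numFieldNormedType.Exports.
Local Open Scope ring_scope.
Local Open Scope complex_scope.
Local Open Scope classical_set_scope.

Section Defs.
Variable R : realType.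
Local Notation C := (R[i]).

Definition adjmx (m n : nat) (A : 'M[C]_(m, n)) : 'M[C]_(n, m) :=
  (map_mx Num.conj A)^T.

Definition herm_mx (n : nat) (A : 'M[C]_n) : Prop := adjmx A = A.

Definition psd_mx (n : nat) (A : 'M[C]_n) : Prop :=
  forall v : 'cV[C]_n, 0 <= (adjmx v *m A *m v) 0 0.

Definition density (n : nat) (rho : 'M[C]_n) : Prop :=
  [/\ herm_mx rho, psd_mx rho & \tr rho = 1].

Definition star_subalgebra (n : nat) (A : {vspace 'M[C]_n}) : Prop :=
  (forall x y, x \in A -> y \in A -> x * y \in A) /\
  (forall x, x \in A -> adjmx x \in A).

Definition lindblad (n : nat) (Hm : 'M[C]_n) (Ls : seq 'M[C]_n)
    (rho : 'M[C]_n) : 'M[C]_n :=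
  - 'i *: (Hm * rho - rho * Hm) +
  \sum_(Lu <- Ls) (Lu * rho * adjmx Lu
                   - (1 / 2%:R) *: (adjmx Lu * Lu * rho + rho * (adjmx Lu * Lu))).

Definition sexp (m n : nat) (f : 'M[C]_(m, n) -> 'M[C]_(m, n)) (t : R)
    (x : 'M[C]_(m, n)) : 'M[C]_(m, n) :=
  lim ((fun N : nat => \sum_(k < N) ((t ^+ k / (k`!)%:R)%:C *: iter k f x)) @ \oo).

Definition reach_span (n : nat) (L : 'M[C]_n -> 'M[C]_n) (S : set 'M[C]_n)
    (x : 'M[C]_n) : Prop :=
  exists (k : nat) (c : 'I_k -> C) (ts : 'I_k -> R) (rs : 'I_k -> 'M[C]_n),
    (forall i, 0 <= ts i /\ S (rs i)) /\
    x = \sum_(i < k) c i *: sexp L (ts i) (rs i).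

Definition proj_factors (n : nat) (V : {vspace 'M[C]_n})
    (P : {linear 'M[C]_n -> 'M[C]_n})
    (Rf : {linear 'M[C]_n -> 'rV[C]_(\dim V)})
    (Jf : {linear 'rV[C]_(\dim V) -> 'M[C]_n}) : Prop :=
  [/\ (forall x, P (P x) = P x),
      (forall x, P x \in V),
      (forall v, v \in V -> exists x, P x = v) &
      [/\ (forall y, Jf y \in V),
      (forall x, Jf (Rf x) = P x) &
      (forall y, Rf (Jf y) = y)]].

Definition reduction_exact (n : nat) (L : 'M[C]_n -> 'M[C]_n) (S : set 'M[C]_n)
    (V : {vspace 'M[C]_n})
    (Rf : {linear 'M[C]_n -> 'rV[C]_(\dim V)})
    (Jf : {linear 'rV[C]_(\dim V) -> 'M[C]_n}) : Prop :=
  forall (t : R) (rho0 : 'M[C]_n), 0 <= t -> S rho0 ->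
    sexp L t rho0 = Jf (sexp (fun y => Rf (L (Jf y))) t (Rf rho0)).

End Defs.

(* Main.v *)
Require Import Defs.
From HB Require Import structures.
From mathcomp Require Import all_boot all_order all_algebra.
From mathcomp Require Import complex.
From mathcomp Require Import all_classical all_reals all_analysis.
From mathcomp Require Import ring lra.
Set Implicit Arguments. Unset Strict Implicit. Unset Printing Implicit Defensive.
Import Order.TTheory GRing.Theory Num.Theory.
Import numFieldTopology.Exports numFieldNormedType.Exports.
Local Open Scope ring_scope.
Local Open Scope complex_scope.
Local Open Scope classical_set_scope.
Section S.
Variable R : realType.
Local Notation C := (R[i]).
Local Notation Rc := complex.Re.

Lemma normC_real (V : normedZmodType C) (z : V) : `|z| = (Rc `|z|)%:C.
Proof. by rewrite RRe_real // ger0_real. Qed.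

Lemma Rc_ge0 (V : normedZmodType C) (z : V) : 0 <= Rc `|z|.
Proof. by rewrite -ler0c -normC_real. Qed.

Lemma ge0_realC (z : C) : 0 <= z -> z = (Rc z)%:C.
Proof. by move=> z0; rewrite RRe_real // ger0_real. Qed.

Lemma mx_entry_le p q (x : 'M[C]_(p,q)) i j : `|x i j| <= `|x|.
Proof.
have H : forall r : R, 0 < r -> `|x i j| < `|x| + r%:C.
  move=> r r0.
  have := congr1 (fun b => b 0 (`|x| + r%:C) x) (@mx_norm_ball C p q).
  rewrite /ball_ /= sub0r normrN ltrDl ltcR r0 => E.
  have : is_true true by [].
  rewrite -E.
  case=> _ /(_ i j).
  by rewrite /ball /= mxE sub0r normrN.
rewrite (normC_real (x i j)) (normC_real x) lecR.
apply/ler_addgt0Pr => r r0.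
have := H r r0.
by rewrite (normC_real (x i j)) (normC_real x) -rmorphD ltcR => /ltW.
Qed.

Section Lin.
Variables (p q p' q' : nat) (f : 'M[C]_(p,q) -> 'M[C]_(p',q')) (hf : linear f).

Lemma lin0 : f 0 = 0.
Proof.
have := hf (-1) 0 0.
by rewrite scaler0 addr0 scaleN1r addNr.
Qed.
Lemma linD x y : f (x + y) = f x + f y.
Proof. by rewrite -[x in LHS]scale1r hf scale1r. Qed.
Lemma linZ a x : f (a *: x) = a *: f x.
Proof. by rewrite -[a *: x]addr0 hf lin0 addr0. Qed.
Lemma linN x : f (- x) = - f x.
Proof. by rewrite -scaleN1r linZ scaleN1r. Qed.
Lemma linB x y : f (x - y) = f x - f y.
Proof. by rewrite linD linN. Qed.
Lemma lin_sum (I : Type) (r : seq I) (g : I -> 'M[C]_(p,q)) :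
  f (\sum_(i <- r) g i) = \sum_(i <- r) f (g i).
Proof.
elim: r => [|a r IH]; first by rewrite !big_nil lin0.
by rewrite !big_cons linD IH.
Qed.

Lemma lin_bound : exists c : R, 0 <= c /\ forall x, `|f x| <= c%:C * `|x|.
Proof.
exists (Rc (\sum_(i < p) \sum_(j < q) `|f (delta_mx i j)|)).
split.
  by rewrite -ler0c -ge0_realC ?sumr_ge0 // => i _; rewrite sumr_ge0.
move=> x.
rewrite -ge0_realC; last by rewrite sumr_ge0 // => i _; rewrite sumr_ge0.
rewrite {1}(matrix_sum_delta x) lin_sum.
apply: (le_trans (ler_norm_sum _ _ _)).
rewrite mulr_suml; apply: ler_sum => i _.
rewrite lin_sum.
apply: (le_trans (ler_norm_sum _ _ _)).
rewrite mulr_suml; apply: ler_sum => j _.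
rewrite linZ normrZ mulrC ler_wpM2l //.
exact: mx_entry_le.
Qed.
End Lin.
Lemma normC_le_ReIm (z : C) : `|z| <= (`|Rc z| + `|complex.Im z|)%:C.
Proof.
rewrite normc_def lecR.
set a := Rc z; set b := complex.Im z.
have -> : `|a| + `|b| = Num.sqrt ((`|a| + `|b|)^+2).
  by rewrite sqrtr_sqr [RHS]ger0_norm.
apply: ler_wsqrtr.
rewrite sqrrD (real_normK (num_real a)) (real_normK (num_real b)).
rewrite addrAC lerDl.
by rewrite mulrn_wge0 // mulr_ge0.
Qed.
Lemma mx_norm_lt p q (M : 'M[C]_(p,q)) (e : C) :
  0 < e -> (forall i j, `|M i j| < e) -> `|M| < e.
Proof.
move=> e0 H.
have := congr1 (fun b => b 0 e M) (@mx_norm_ball C p q).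
rewrite /ball_ /= sub0r normrN => <-.
split => // i j.
by rewrite /ball /= mxE sub0r normrN.
Qed.

Lemma R_seq_cvg (v : nat -> R) :
  (forall e : R, 0 < e -> exists N, forall k, (N <= k)%N -> `|v N - v k| < e) ->
  cvg (v @ \oo).
Proof.
move=> H; apply: cauchy_cvg.
apply/cauchyP => e e0.
have [N HN] := H e e0.
by exists (v N); exists N.
Qed.
Local Notation MT p q := ('M[C]_(p,q) : normedModType C).
Lemma ReB (x y : C) : Rc (x - y) = Rc x - Rc y.
Proof. by case: x; case: y. Qed.
Lemma ImB (x y : C) : complex.Im (x - y) = complex.Im x - complex.Im y.
Proof. by case: x; case: y. Qed.

Lemma normc_ge_Im (z : C) : `|complex.Im z|%:C <= `|z|.
Proof.
rewrite normc_def lecR -sqrtr_sqr; apply: ler_wsqrtr.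
by rewrite lerDr sqr_ge0.
Qed.

Lemma mx_cauchy_cvg p q (u : nat -> 'M[C]_(p,q)) :
  (forall e : R, 0 < e -> exists N, forall a b, (N <= a)%N -> (N <= b)%N ->
      `|u a - u b| < e%:C) ->
  exists l : MT p q, u @ \oo --> l.
Proof.
move=> H.
have cRe i j : cvg ((fun k => Rc (u k i j)) @ \oo).
  apply: R_seq_cvg => e e0; have [N HN] := H e e0; exists N => k Nk.
  rewrite -ltcR -ReB; apply: le_lt_trans (normc_ge_Re _) _.
  apply: le_lt_trans (HN N k (leqnn N) Nk).
  by have := mx_entry_le (u N - u k) i j; rewrite !mxE.
have cIm i j : cvg ((fun k => complex.Im (u k i j)) @ \oo).
  apply: R_seq_cvg => e e0; have [N HN] := H e e0; exists N => k Nk.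
  rewrite -ltcR -ImB.
  apply: le_lt_trans (normc_ge_Im _) _.
  apply: le_lt_trans (HN N k (leqnn N) Nk).
  by have := mx_entry_le (u N - u k) i j; rewrite !mxE.
pose a i j := lim ((fun k => Rc (u k i j)) @ \oo).
pose b i j := lim ((fun k => complex.Im (u k i j)) @ \oo).
exists (\matrix_(i, j) (a i j +i* b i j)).
apply/cvgrPdist_lt => eps eps0.
have eE := ge0_realC (ltW eps0).
have ep : 0 < Rc eps / 2.
  by rewrite divr_gt0 // -ltcR -eE.
have Hij : forall ij : 'I_p * 'I_q, \forall k \near \oo,
   `|a ij.1 ij.2 - Rc (u k ij.1 ij.2)| < Rc eps / 2 /\
   `|b ij.1 ij.2 - complex.Im (u k ij.1 ij.2)| < Rc eps / 2.
  move=> [i j] /=.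
  have h1 := (cvgrPdist_lt _ _).1 (cRe i j) _ ep.
  have h2 := (cvgrPdist_lt _ _).1 (cIm i j) _ ep.
  by apply: filterS2 (h1 _) (h2 _) => k; split.
have HF := @filter_forall _ _ _ \oo (filter_on_Filter eventually_filterType) Hij.
case: HF => N _ HN; exists N => // k /HN Hk.
apply: mx_norm_lt => // i j.
rewrite !mxE.
have [h1 h2] := Hk (i, j).
apply: le_lt_trans (normC_le_ReIm _) _.
rewrite eE ltcR ReB ImB /= (splitr (Rc eps)).
by rewrite ltrD.
Qed.
Lemma sum_split_nat (V : zmodType) (F : nat -> V) a b : (a <= b)%N ->
  \sum_(k < b) F k - \sum_(k < a) F k = \sum_(a <= k < b) F k.
Proof.
move=> ab.
rewrite -!(big_mkord xpredT) (big_cat_nat (leq0n a) ab) /=.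
by rewrite addrAC subrr add0r.
Qed.

Lemma series_dom_cvg p q (v : nat -> 'M[C]_(p,q)) (w : nat -> R) :
  (forall k, `|v k| <= (w k)%:C) -> cvgn (series w) ->
  exists l : MT p q, (fun N => \sum_(k < N) v k) @ \oo --> l.
Proof.
move=> vw cw.
have w0 k : 0 <= w k by rewrite -ler0c; apply: le_trans (vw k).
apply: mx_cauchy_cvg => e e0.
have e2 : 0 < e / 2 by rewrite divr_gt0.
have := (cvgrPdist_lt _ _).1 cw _ e2.
case=> N0 _ HN; exists N0.
suff key : forall a b, (N0 <= a)%N -> (N0 <= b)%N -> (a <= b)%N ->
   `|\sum_(k < a) v k - \sum_(k < b) v k| < e%:C.
  move=> a b Ha Hb; case/orP: (leq_total a b) => ab; first exact: key.
  by rewrite distrC; apply: key.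
move=> a b Ha Hb ab.
rewrite distrC sum_split_nat //.
apply: le_lt_trans (ler_norm_sum _ _ _) _.
apply: (@le_lt_trans _ _ (\sum_(a <= k < b) (w k)%:C)); first exact: ler_sum.
rewrite -rmorph_sum ltcR.
have -> : \sum_(a <= k < b) w k = series w b - series w a.
  rewrite /series /= -sum_split_nat //.
  by rewrite !big_mkord.
have h1 := HN a Ha; have h2 := HN b Hb.
rewrite /= in h1 h2.
set L := limn _ in h1 h2.
have -> : series w b - series w a = (L - series w a) - (L - series w b).
  by ring.
rewrite (splitr e); apply: ltrD; first exact: le_lt_trans (ler_norm _) h1.
by rewrite -normrN in h2; exact: le_lt_trans (ler_norm _) h2.
Qed.
Lemma normrC (r : R) : `|r%:C| = `|r|%:C.
Proof.
rewrite normc_def /= expr0n /= addr0 sqrtr_sqr //.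
Qed.

Section Iter.
Variables (p q : nat) (f : 'M[C]_(p,q) -> 'M[C]_(p,q)) (hf : linear f).

Lemma iter_lin k : linear (iter k f).
Proof.
elim: k => [|k IH] a x y //=.
by rewrite IH hf.
Qed.

Lemma iter_bound c : 0 <= c -> (forall x, `|f x| <= c%:C * `|x|) ->
  forall k x, `|iter k f x| <= (c ^+ k)%:C * `|x|.
Proof.
move=> c0 hc; elim=> [|k IH] x /=; first by rewrite expr0 mul1r.
apply: le_trans (hc _) _.
rewrite exprS rmorphM -mulrA ler_wpM2l //; first by rewrite ler0c.
Qed.

Lemma exp_cvg (t : R) x : exists l : MT p q,
  (fun N => \sum_(k < N) ((t ^+ k / (k`!)%:R)%:C *: iter k f x)) @ \oo --> l.
Proof.
have [c [c0 hc]] := lin_bound hf.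
apply: (@series_dom_cvg p q (fun k => (t ^+ k / (k`!)%:R)%:C *: iter k f x) (Rc `|x| *: exp_coeff (`|t| * c))); last first.
  exact/is_cvg_seriesZ/is_cvg_series_exp_coeff.
move=> k /=.
rewrite normrZ normrC.
apply: le_trans (ler_wpM2l _ (iter_bound c0 hc k x)) _.
  by rewrite ler0c.
have -> : (Rc `|x| *: exp_coeff (`|t| * c)) k =
   Rc `|x| * ((`|t| * c) ^+ k / (k`!)%:R) by [].
rewrite {1}(normC_real x) mulrA -!rmorphM lecR.
rewrite normrM normrX normfV normr_nat.
by rewrite le_eqVlt; apply/orP; left; apply/eqP; rewrite [LHS]mulrC exprMn mulrAC.
Qed.
End Iter.
Lemma lin_cvg p q p' q' (g : 'M[C]_(p,q) -> 'M[C]_(p',q')) (hg : linear g)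
  (u : nat -> 'M[C]_(p,q)) (y : MT p q) :
  u @ \oo --> y -> (fun N => g (u N)) @ \oo --> (g y : MT p' q').
Proof.
move=> H.
have [c [c0 hc]] := lin_bound hg.
apply/cvgrPdist_lt => e e0.
have c1 : 0 < c%:C + 1 by rewrite ltr_wpDl // ler0c.
have := (cvgrPdist_lt _ _).1 H (e / (c%:C + 1)) (divr_gt0 e0 c1).
case=> N _ HN; exists N => // k /HN /= Hk.
rewrite -linB //.
apply: le_lt_trans (hc _) _.
apply: (@le_lt_trans _ _ ((c%:C + 1) * `|y - u k|)).
  by rewrite ler_wpM2r // lerDl.
by rewrite mulrC -ltr_pdivlMr.
Qed.
Definition Rn p q (x : 'M[C]_(p,q)) := Rc `|x|.

Lemma Rn_ge0 p q (x : 'M[C]_(p,q)) : 0 <= Rn x.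
Proof. exact: Rc_ge0. Qed.
Lemma RnD p q (x y : 'M[C]_(p,q)) : Rn (x + y) <= Rn x + Rn y.
Proof.
have h := ler_normD x y.
by rewrite (normC_real (x + y)) (normC_real x) (normC_real y) -rmorphD lecR in h.
Qed.
Lemma RnN p q (x : 'M[C]_(p,q)) : Rn (- x) = Rn x.
Proof. by rewrite /Rn normrN. Qed.
Lemma RnZ p q (a : R) (x : 'M[C]_(p,q)) : Rn (a%:C *: x) = `|a| * Rn x.
Proof.
have h := normrZ a%:C x.
rewrite (normC_real (a%:C *: x)) (normC_real x) normrC -rmorphM in h.
by move/complexI: h.
Qed.
Lemma Rn_sum p q (I : Type) (r : seq I) (F : I -> 'M[C]_(p,q)) :
  Rn (\sum_(i <- r) F i) <= \sum_(i <- r) Rn (F i).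
Proof.
elim: r => [|a r IH]; first by rewrite !big_nil /Rn normr0.
rewrite !big_cons; apply: le_trans (RnD _ _) _.
by rewrite lerD2l.
Qed.
Lemma Rn_lt p q (x : 'M[C]_(p,q)) (e : R) : `|x| < e%:C -> Rn x < e.
Proof. by rewrite /Rn -ltcR -normC_real. Qed.
Lemma Rn_le p q (x : 'M[C]_(p,q)) (e : R) : `|x| <= e%:C -> Rn x <= e.
Proof. by rewrite /Rn -lecR -normC_real. Qed.
Lemma Rn_eq0 p q (x : 'M[C]_(p,q)) : Rn x = 0 -> x = 0.
Proof. by move=> h; apply/normr0_eq0; rewrite normC_real -/(Rn x) h. Qed.
Lemma sum_ord_nat (V : zmodType) (F : nat -> V) N :
  \sum_(k < N) F k = \sum_(0 <= k < N) F k.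
Proof. by rewrite big_mkord. Qed.

Lemma ident p q (b : nat -> 'M[C]_(p,q)) (B c : R) : 0 <= B -> 0 <= c ->
  (forall k, Rn (b k) <= B * c ^+ k) ->
  (forall t : R, 0 < t ->
     (fun N => \sum_(k < N) ((t ^+ k / (k`!)%:R)%:C *: b k)) @ \oo --> (0 : MT p q)) ->
  forall k, b k = 0.
Proof.
move=> B0 c0 hb H.
pose E := limn (series (exp_coeff c)).
have hE N : series (exp_coeff c) N <= E.
  apply: nondecreasing_cvgn_le; last exact: is_cvg_series_exp_coeff.
  by apply: nondecreasing_series => k _ _; exact: exp_coeff_ge0.
have E0 : 0 <= E by apply: le_trans (hE 0%N); rewrite /series /= big_geq.
elim/ltn_ind => j IH.
have key : forall t : R, 0 < t -> t <= 1 ->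
    t ^+ j / (j`!)%:R * Rn (b j) <= t ^+ j.+1 * (1 + B * E).
  move=> t t0 t1.
  have tj0 : 0 < (t ^+ j.+1)%:C by rewrite ltcR exprn_gt0.
  have := (cvgrPdist_lt _ _).1 (H t t0) _ tj0.
  case=> N0 _ HN.
  pose N := maxn N0 j.+1.
  have := HN N (leq_maxl _ _); rewrite /= sub0r normrN => /Rn_lt hS.
  set S := \sum_(k < N) _ in hS.
  have jN : (j < N)%N by rewrite leq_maxr.
  have Hsplit : S = (t ^+ j / (j`!)%:R)%:C *: b j +
      \sum_(j.+1 <= k < N) (t ^+ k / (k`!)%:R)%:C *: b k.
    rewrite /S (sum_ord_nat (fun k => (t ^+ k / (k`!)%:R)%:C *: b k)) (big_cat_nat (leq0n j) (ltnW jN)) /=.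
    rewrite big_nat_cond big1 ?add0r; last first.
      by move=> k /andP[/andP[_ kj] _]; rewrite IH // scaler0.
    by rewrite big_ltn.
  have tail : Rn (\sum_(j.+1 <= k < N) (t ^+ k / (k`!)%:R)%:C *: b k)
      <= t ^+ j.+1 * (B * E).
    apply: le_trans (Rn_sum _ _) _.
    apply: (@le_trans _ _ (\sum_(j.+1 <= k < N) t ^+ j.+1 * (B * exp_coeff c k))).
      apply: ler_sum_nat => k /andP[jk kN].
      rewrite RnZ ger0_norm; last by rewrite divr_ge0 // exprn_ge0 // ltW.
      apply: (@le_trans _ _ (t ^+ k / (k`!)%:R * (B * c ^+ k))).
        by rewrite ler_wpM2l // divr_ge0 // exprn_ge0 // ltW.
      have -> : t ^+ k / (k`!)%:R * (B * c ^+ k) = t ^+ k * (B * exp_coeff c k).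
        by rewrite /exp_coeff /=; ring.
      rewrite ler_wpM2r //; first by rewrite mulr_ge0 // exp_coeff_ge0.
      exact: ler_wiXn2l (ltW t0) t1 _ _ jk.
    rewrite -mulr_sumr ler_wpM2l ?exprn_ge0 ?(ltW t0) //.
    rewrite -mulr_sumr ler_wpM2l //.
    apply: le_trans (hE N).
    rewrite /series /= (big_cat_nat (leq0n j.+1) jN) /= lerDr.
    by rewrite sumr_ge0 // => k _; exact: exp_coeff_ge0.
  have hbj : t ^+ j / (j`!)%:R * Rn (b j) = Rn ((t ^+ j / (j`!)%:R)%:C *: b j).
    by rewrite RnZ ger0_norm // divr_ge0 // exprn_ge0 // ltW.
  rewrite hbj.
  have -> : (t ^+ j / (j`!)%:R)%:C *: b j =
      S - \sum_(j.+1 <= k < N) (t ^+ k / (k`!)%:R)%:C *: b k.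
    by rewrite Hsplit addrK.
  apply: le_trans (RnD _ _) _.
  rewrite RnN mulrDr mulr1.
  by apply: lerD => //; exact: ltW.
apply: Rn_eq0; apply/eqP; rewrite eq_le Rn_ge0 andbT.
have K0 : 0 < (1 + B * E) * (j`!)%:R.
  apply: mulr_gt0; last by rewrite ltr0n fact_gt0.
  by have := mulr_ge0 B0 E0; lra.
apply/ler_addgt0Pr => e e0; rewrite add0r.
pose t := Num.min 1 (e / ((1 + B * E) * (j`!)%:R)).
have t0 : 0 < t by rewrite lt_min ltr01 divr_gt0.
have t1 : t <= 1 by rewrite ge_min lexx.
have te : t <= e / ((1 + B * E) * (j`!)%:R) by rewrite ge_min lexx orbT.
have := key t t0 t1.
have e1 : t ^+ j / (j`!)%:R * Rn (b j) = t ^+ j * (Rn (b j) / (j`!)%:R).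
  by rewrite mulrAC mulrA.
have e2 : t ^+ j.+1 * (1 + B * E) = t ^+ j * (t * (1 + B * E)).
  by rewrite exprSr mulrA.
rewrite e1 e2 ler_pM2l ?exprn_gt0 // ler_pdivrMr ?ltr0n ?fact_gt0 // => h.
apply: le_trans h _.
by rewrite -mulrA -ler_pdivlMr.
Qed.
Lemma sexp_cvg p q (f : 'M[C]_(p,q) -> 'M[C]_(p,q)) (hf : linear f) t x :
  (fun N => \sum_(k < N) ((t ^+ k / (k`!)%:R)%:C *: iter k f x)) @ \oo
     --> (sexp f t x : MT p q).
Proof.
have [l hl] := exp_cvg hf t x.
suff -> : sexp f t x = l by [].
exact: (cvg_lim (@norm_hausdorff _ _) hl).
Qed.

Section LinComb.
Variables (p q p' q' : nat).
Implicit Types f g : 'M[C]_(p,q) -> 'M[C]_(p',q').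
Lemma linD_fun f g : linear f -> linear g -> linear (fun x => f x + g x).
Proof. by move=> hf hg a x y; rewrite hf hg scalerDr addrACA. Qed.
Lemma linZ_fun (c : C) f : linear f -> linear (fun x => c *: f x).
Proof. by move=> hf a x y; rewrite hf scalerDr !scalerA mulrC. Qed.
Lemma linN_fun f : linear f -> linear (fun x => - f x).
Proof. by move=> hf a x y; rewrite hf opprD scalerN. Qed.
Lemma linB_fun f g : linear f -> linear g -> linear (fun x => f x - g x).
Proof. by move=> hf hg; apply: linD_fun => //; apply: linN_fun. Qed.
Lemma linsum_fun (I : Type) (r : seq I) (F : I -> 'M[C]_(p,q) -> 'M[C]_(p',q')) :
  (forall i, linear (F i)) -> linear (fun x => \sum_(i <- r) F i x).
Proof.
move=> hF a x y; elim: r => [|i r IH]; first by rewrite !big_nil scaler0 addr0.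
by rewrite !big_cons IH hF scalerDr addrACA.
Qed.
End LinComb.

Lemma linL n (A : 'M[C]_n) : linear (fun x : 'M[C]_n => A * x).
Proof. by move=> a x y; rewrite -!mulmxE mulmxDr scalemxAr. Qed.
Lemma linR n (B : 'M[C]_n) : linear (fun x : 'M[C]_n => x * B).
Proof. by move=> a x y; rewrite -!mulmxE mulmxDl scalemxAl. Qed.
Lemma linLR n (A B : 'M[C]_n) : linear (fun x : 'M[C]_n => A * x * B).
Proof. by move=> a x y; rewrite -!mulmxE mulmxDr mulmxDl -scalemxAr -scalemxAl. Qed.

Lemma lindblad_lin n (Hm : 'M[C]_n) Ls : linear (lindblad Hm Ls).
Proof.
rewrite /lindblad.
apply: linD_fun.
  by apply: linZ_fun; apply: linB_fun; [apply: linL | apply: linR].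
apply: linsum_fun => Lu.
apply: linB_fun; first exact: linLR.
by apply: linZ_fun; apply: linD_fun; [apply: linL | apply: linR].
Qed.
Lemma krylov n (L : 'M[C]_n -> 'M[C]_n) (hL : linear L) (S : set 'M[C]_n)
  (Rsp : {vspace 'M[C]_n}) (hRsp : forall x, x \in Rsp <-> reach_span L S x)
  rho0 : S rho0 -> forall k, iter k L rho0 \in Rsp.
Proof.
move=> Srho.
have memR t : 0 <= t -> sexp L t rho0 \in Rsp.
  move=> t0; apply/hRsp.
  exists 1%N, (fun _ => 1), (fun _ => t), (fun _ => rho0); split => //.
  by rewrite big_ord1 scale1r.
pose Phi (x : 'M[C]_n) := x - projv Rsp x.
have hPhi : linear Phi.
  by apply: linB_fun => //; exact: linearP.
have [cP [cP0 hcP]] := lin_bound hPhi.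
have [cL [cL0 hcL]] := lin_bound hL.
have Hb : forall k, Phi (iter k L rho0) = 0.
  apply: (@ident n n _ (cP * Rn rho0) cL).
  - exact: mulr_ge0 cP0 (Rn_ge0 _).
  - exact: cL0.
  - move=> k; apply: Rn_le.
    apply: le_trans (hcP _) _.
    apply: le_trans (ler_wpM2l _ (iter_bound cL0 hcL k rho0)) _.
      by rewrite ler0c.
    by rewrite (normC_real rho0) mulrA -!rmorphM /Rn mulrAC.
  - move=> t t0.
    have := lin_cvg hPhi (@sexp_cvg n n L hL t rho0).
    rewrite {2}/Phi (projv_id (memR t (ltW t0))) subrr.
    suff -> : (fun N => Phi (\sum_(k < N) ((t ^+ k / (k`!)%:R)%:C *: iter k L rho0)))
       = (fun N => \sum_(k < N) ((t ^+ k / (k`!)%:R)%:C *: Phi (iter k L rho0))) by [].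
    apply: funext => N; rewrite lin_sum //.
    by apply: eq_bigr => k _; rewrite linZ.
move=> k; have := Hb k; rewrite /Phi => /eqP; rewrite subr_eq0 => /eqP ->.
exact: memv_proj.
Qed.
Lemma memR_sexp n (L : 'M[C]_n -> 'M[C]_n) (S : set 'M[C]_n)
  (Rsp : {vspace 'M[C]_n}) (hRsp : forall x, x \in Rsp <-> reach_span L S x)
  rho0 t : S rho0 -> 0 <= t -> sexp L t rho0 \in Rsp.
Proof.
move=> Srho t0; apply/hRsp.
exists 1%N, (fun _ => 1), (fun _ => t), (fun _ => rho0); split => //.
by rewrite big_ord1 scale1r.
Qed.

Lemma part1 n (L : 'M[C]_n -> 'M[C]_n) (hL : linear L) (S : set 'M[C]_n)
  (Rsp : {vspace 'M[C]_n}) (hRsp : forall x, x \in Rsp <-> reach_span L S x)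
  (V : {vspace 'M[C]_n}) (hRV : (Rsp <= V)%VS)
  (P : {linear 'M[C]_n -> 'M[C]_n})
  (Rf : {linear 'M[C]_n -> 'rV[C]_(\dim V)})
  (Jf : {linear 'rV[C]_(\dim V) -> 'M[C]_n}) :
  proj_factors P Rf Jf -> reduction_exact L S Rf Jf.
Proof.
case=> Pidem Pin Psurj [Jin JR RJ].
have PV w : w \in V -> P w = w.
  by move=> /Psurj [x <-]; rewrite Pidem.
move=> t rho0 t0 Srho.
have KV k : iter k L rho0 \in V := subvP hRV _ (krylov hL hRsp Srho k).
have itF k : iter k (fun y => Rf (L (Jf y))) (Rf rho0) = Rf (iter k L rho0).
  by elim: k => //= k ->; rewrite JR PV.
have c1 := lin_cvg (linearP Rf) (@sexp_cvg n n L hL t rho0).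
have -> : sexp (fun y => Rf (L (Jf y))) t (Rf rho0) = Rf (sexp L t rho0).
  rewrite {1}/sexp.
  have -> : (fun N => \sum_(k < N) ((t ^+ k / (k`!)%:R)%:C *:
               iter k (fun y => Rf (L (Jf y))) (Rf rho0)))
      = (fun N => Rf (\sum_(k < N) ((t ^+ k / (k`!)%:R)%:C *: iter k L rho0))).
    apply: funext => N; rewrite linear_sum.
    by apply: eq_bigr => k _; rewrite linearZ itF.
  exact: (cvg_lim (@norm_hausdorff _ _) c1).
by rewrite JR PV // (subvP hRV) // (memR_sexp hRsp Srho t0).
Qed.
Lemma part3 n (L : 'M[C]_n -> 'M[C]_n) (S : set 'M[C]_n)
  (Rsp : {vspace 'M[C]_n}) (hRsp : forall x, x \in Rsp <-> reach_span L S x)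
  (W : {vspace 'M[C]_n}) (P' : {linear 'M[C]_n -> 'M[C]_n})
  (Rf' : {linear 'M[C]_n -> 'rV[C]_(\dim W)})
  (Jf' : {linear 'rV[C]_(\dim W) -> 'M[C]_n}) :
  proj_factors P' Rf' Jf' -> reduction_exact L S Rf' Jf' ->
  (\dim Rsp <= \dim W)%N.
Proof.
case=> _ _ _ [Jin _ _] hred.
apply: dimvS; apply/subvP => x /hRsp [k [c [ts [rs [hyp ->]]]]].
apply: memv_suml => i _; apply: memvZ.
have [t0 Sr] := hyp i.
by rewrite (hred _ _ t0 Sr).
Qed.

Section Proj.
Variables (n : nat) (U : {vspace 'M[C]_n}).
Definition Jfun (y : 'rV[C]_(\dim U)) : 'M[C]_n :=
  \sum_(i < \dim U) y 0 i *: (vbasis U)`_i.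
Lemma Jfun_lin : linear Jfun.
Proof.
move=> a x y; rewrite /Jfun scaler_sumr -big_split; apply: eq_bigr => i _.
by rewrite !mxE scalerDl scalerA.
Qed.
HB.instance Definition _ := GRing.isLinear.Build C 'rV[C]_(\dim U) 'M[C]_n
  *:%R Jfun Jfun_lin.
Definition Rfun (x : 'M[C]_n) : 'rV[C]_(\dim U) :=
  \row_i coord (vbasis U) i (projv U x).
Lemma Rfun_lin : linear Rfun.
Proof.
move=> a x y; apply/rowP => i; rewrite !mxE linearP /= linearP /=.
by [].  
Qed.
HB.instance Definition _ := GRing.isLinear.Build C 'M[C]_n 'rV[C]_(\dim U)
  *:%R Rfun Rfun_lin.
Definition Pfun (x : 'M[C]_n) : 'M[C]_n := projv U x.
Lemma Pfun_lin : linear Pfun.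
Proof. by move=> a x y; rewrite /Pfun linearP. Qed.
HB.instance Definition _ := GRing.isLinear.Build C 'M[C]_n 'M[C]_n
  *:%R Pfun Pfun_lin.

Lemma Jfun_in y : Jfun y \in U.
Proof.
apply: memv_suml => i _; apply: memvZ; apply: vbasis_mem.
by apply: mem_nth; rewrite size_tuple.
Qed.

Lemma proj_factors_U : proj_factors Pfun Rfun Jfun.
Proof.
split.
- by move=> x /=; rewrite /Pfun projv_id // memv_proj.
- by move=> x /=; rewrite /Pfun memv_proj.
- by move=> v vU; exists v => /=; rewrite /Pfun projv_id.
split.
- exact: Jfun_in.
- move=> x /=; rewrite /Jfun /Rfun /Pfun [RHS](coord_vbasis (memv_proj U x)).
  by apply: eq_bigr => i _; rewrite mxE.
- move=> y /=; apply/rowP => i; rewrite mxE projv_id ?Jfun_in //.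
  by rewrite /Jfun coord_sum_free // (basis_free (vbasisP U)).
Qed.
End Proj.
End S.
Unset Implicit Arguments.
Theorem theorem1 (R : realType) (n : nat)
    (A : {vspace 'M[R[i]]_n}) (hA : star_subalgebra A)
    (Hm : 'M[R[i]]_n) (hHm : herm_mx Hm) (Ls : seq 'M[R[i]]_n)
    (hLA : forall x, x \in A -> lindblad Hm Ls x \in A)
    (S : set 'M[R[i]]_n) (hS : forall rho, S rho -> density rho /\ rho \in A)
    (Rsp : {vspace 'M[R[i]]_n})
    (hRsp : forall x, x \in Rsp <-> reach_span (lindblad Hm Ls) S x)
    (V : {vspace 'M[R[i]]_n}) (hRV : (Rsp <= V)%VS)
    (P : {linear 'M[R[i]]_n -> 'M[R[i]]_n})
    (Rf : {linear 'M[R[i]]_n -> 'rV[R[i]]_(\dim V)})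
    (Jf : {linear 'rV[R[i]]_(\dim V) -> 'M[R[i]]_n})
    (hPRJ : proj_factors P Rf Jf) :
  reduction_exact (lindblad Hm Ls) S Rf Jf /\
  (exists (P' : {linear 'M[R[i]]_n -> 'M[R[i]]_n})
          (Rf' : {linear 'M[R[i]]_n -> 'rV[R[i]]_(\dim Rsp)})
          (Jf' : {linear 'rV[R[i]]_(\dim Rsp) -> 'M[R[i]]_n}),
      proj_factors P' Rf' Jf' /\ reduction_exact (lindblad Hm Ls) S Rf' Jf') /\
  (forall (W : {vspace 'M[R[i]]_n})
          (P' : {linear 'M[R[i]]_n -> 'M[R[i]]_n})
          (Rf' : {linear 'M[R[i]]_n -> 'rV[R[i]]_(\dim W)})
          (Jf' : {linear 'rV[R[i]]_(\dim W) -> 'M[R[i]]_n}),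
      proj_factors P' Rf' Jf' -> reduction_exact (lindblad Hm Ls) S Rf' Jf' ->
      (\dim Rsp <= \dim W)%N).
Proof.
have hL := lindblad_lin Hm Ls.
split; first exact: (part1 hL hRsp hRV hPRJ).
split.
  do 3 eexists; split; first exact: (@proj_factors_U R n Rsp).
  exact: (part1 hL hRsp (subvv Rsp) (@proj_factors_U R n Rsp)).
move=> W P' Rf' Jf' hp hr; exact: (part3 hRsp hp hr).
Qed.
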